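(* For every $p\in\mathbb{H}_1[X]$, the degree $\deg(p)$ is integral (or $-\infty$ for $p=0$). Furthermore, for all $p,q\in\mathbb{H}_1[X]$, $\deg(p\cdot q)=\deg(p)+\deg(q)$.
   Context: $\mathbb{H}$ is the skew-field of real quaternions (basis $1,i,j,k$, $i^2=j^2=k^2=ijk=-1$, $ij=-ji=k$ and cyclic permutations); for $a=a_0+ia_1+ja_2+ka_3$ write $\Re(a)=a_0$, $\Im_i(a)=a_1$, $\Im_j(a)=a_2$, $\Im_k(a)=a_3$. The set $\mathbb{H}^{\mathbb{H}}$ of all maps $\mathbb{H}\to\mathbb{H}$ is a ring under pointwise addition and multiplication; identify $a\in\mathbb{H}$ with the constant map $x\mapsto a$ and let $X$ be the identity map. $\mathbb{H}_1[X]$ is the smallest subring of $\mathbb{H}^{\mathbb{H}}$ containing $X$ and all constant maps (e.g. $a_1+X a_2 X X a_3 + a_4 XXX a_5$). For $f\in\mathbb{H}_1[X]$ define real four-variate functions $\tilde f_0,\ldots,\tilde f_3$ by $\tilde f_0(X_0,\ldots,X_3)=\Re(f(X_0+iX_1+jX_2+kX_3))$, $\tilde f_1=\Im_i(f(\cdot))$, $\tilde f_2=\Im_j(f(\cdot))$, $\tilde f_3=\Im_k(f(\cdot))$; these are real polynomials in $X_0,\ldots,X_3$. The degree of $f\in\mathbb{H}_1[X]$ is defined as $\deg(f):=\tfrac12\deg(\tilde f_0^2+\tilde f_1^2+\tilde f_2^2+\tilde f_3^2)$, where on the right $\deg$ is total degree of a real four-variate polynomial (with $\deg(0)=-\infty$).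 *)

(* Defs.v *)
From HB Require Import structures.
From mathcomp Require Import all_boot all_order all_algebra.
From mathcomp Require Import reals.
From mathcomp Require Import mpoly.
Set Implicit Arguments. Unset Strict Implicit. Unset Printing Implicit Defensive.
Import Order.TTheory GRing.Theory Num.Theory.
Local Open Scope ring_scope.

Record quat (R : realType) := Quat { qRe : R; qIi : R; qIj : R; qIk : R }.

Section Quat.
Variable R : realType.
Definition qconst (a : R) : quat R := Quat a 0 0 0.
Definition qadd (a b : quat R) : quat R :=
  Quat (qRe a + qRe b) (qIi a + qIi b) (qIj a + qIj b) (qIk a + qIk b).
Definition qopp (a : quat R) : quat R :=
  Quat (- qRe a) (- qIi a) (- qIj a) (- qIk a).
(* Hamilton product: i^2=j^2=k^2=ijk=-1, ij=-ji=k, jk=-kj=i, ki=-ik=j. *)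
Definition qmul (a b : quat R) : quat R :=
  Quat (qRe a * qRe b - qIi a * qIi b - qIj a * qIj b - qIk a * qIk b)
       (qRe a * qIi b + qIi a * qRe b + qIj a * qIk b - qIk a * qIj b)
       (qRe a * qIj b - qIi a * qIk b + qIj a * qRe b + qIk a * qIi b)
       (qRe a * qIk b + qIi a * qIj b - qIj a * qIi b + qIk a * qRe b).
End Quat.

Definition fadd (R : realType) (f g : quat R -> quat R) := fun x => qadd (f x) (g x).
Definition fmul (R : realType) (f g : quat R -> quat R) := fun x => qmul (f x) (g x).
Definition fopp (R : realType) (f : quat R -> quat R) := fun x => qopp (f x).
Definition fzero (R : realType) : quat R -> quat R := fun _ => Quat 0 0 0 0.

(* H_1[X]: the smallest subring of H^H containing X (identity) and all
   constant maps, given as an inductive closure. *)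
Inductive inH1 (R : realType) : (quat R -> quat R) -> Prop :=
  | inH1_const (a : quat R) : inH1 (fun _ => a)
  | inH1_X : inH1 (fun x => x)
  | inH1_add f g : inH1 f -> inH1 g -> inH1 (fadd f g)
  | inH1_opp f : inH1 f -> inH1 (fopp f)
  | inH1_mul f g : inH1 f -> inH1 g -> inH1 (fmul f g).

(* The real four-variate function  ~f0^2 + ~f1^2 + ~f2^2 + ~f3^2,
   with variables v 0, v 1, v 2, v 3 standing for X0, X1, X2, X3. *)
Definition sumsq (R : realType) (f : quat R -> quat R) (v : 'I_4 -> R) : R :=
  let y := f (Quat (v 0%R) (v 1%R) (v 2%R) (v 3%R)) in
  qRe y ^+ 2 + qIi y ^+ 2 + qIj y ^+ 2 + qIk y ^+ 2.

(* g : R^4 -> R is (the function of) a real polynomial P of total degree d,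
   with d = None standing for deg 0 = -oo.  (msize P = 1 + total degree,
   and msize 0 = 0.) *)
Definition poly_fun_deg (R : realType) (g : ('I_4 -> R) -> R) (d : option nat) :=
  exists P : {mpoly R[4]},
    (forall v, P.@[v] = g v) /\
    d = (if P == 0 then None else Some (msize P).-1).

(* deg(f) = 1/2 deg(~f0^2+...+~f3^2), as a rational (None = -oo). *)
Definition degH (R : realType) (f : quat R -> quat R) (d : option rat) :=
  exists t, poly_fun_deg (sumsq f) t /\ d = omap (fun n : nat => n%:R / 2) t.

(* Addition on Z u {-oo} (here on rat u {-oo}), -oo absorbing. *)
Definition oadd (a b : option rat) : option rat :=
  match a, b with Some x, Some y => Some (x + y) | _, _ => None end.

(* Main.v *)
Require Import Defs.
From HB Require Import structures.
From mathcomp Require Import all_boot all_order all_algebra.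
From mathcomp Require Import reals mpoly ring lra.
From Stdlib Require Import Classical FunctionalExtensionality.
Set Implicit Arguments. Unset Strict Implicit. Unset Printing Implicit Defensive.
Import Order.TTheory GRing.Theory Num.Theory.
Local Open Scope ring_scope.

Section Good.
Variable R : realDomainType.
Definition good (S : {mpoly R[4]}) :=
  (S == 0) || ((0 < S@_(mlead S)) && ~~ odd (mdeg (mlead S))).

Lemma good_sq a : good (a * a).
Proof.
rewrite /good; have [->|nz] := eqVneq a 0; first by rewrite mul0r eqxx.
rewrite (negbTE (mulf_neq0 nz nz)) /= mleadM // mleadcM mdegD addnn odd_double andbT.
by rewrite -expr2 lt_def sqr_ge0 andbT expf_neq0 // mleadc_eq0.
Qed.

Lemma good_add S T : good S -> good T -> good (S + T).
Proof.
have [->|nzS] := eqVneq S 0; first by rewrite add0r.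
have [->|nzT] := eqVneq T 0; first by rewrite addr0.
rewrite /good (negbTE nzS) (negbTE nzT).
move=> /= /andP[pS eS] /andP[pT eT]; apply/orP; right.
case: (ltgtP (mlead S) (mlead T)) => [lt|lt|eq].
- by rewrite mleadDr // mcoeffD mcoeff_gt_mlead // add0r pT.
- by rewrite mleadDl // mcoeffD (mcoeff_gt_mlead lt) addr0 pS.
have hc : 0 < (S + T)@_(mlead S) by rewrite mcoeffD {2}eq ltr_wpDr // ltW.
have -> : mlead (S + T) = mlead S.
  apply/le_anti; apply/andP; split.
    by have := mleadD_le S T; rewrite -eq joinxx.
  by apply: msupp_le_mlead; rewrite -[_ \in _]negbK -mcoeff_eq0 gt_eqF.
by rewrite hc eS.
Qed.

Lemma good_deg S : good S -> S != 0 -> ~~ odd (msize S).-1.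
Proof. by rewrite /good => /orP[->//|/andP[_ e]] nz; rewrite -mlead_deg. Qed.
End Good.
Section Main.
Variable R : realType.

Lemma inH1_poly (p : quat R -> quat R) : inH1 p ->
  exists a b c d : {mpoly R[4]}, forall v : 'I_4 -> R,
    p (Quat (v 0%R) (v 1%R) (v 2%R) (v 3%R)) = Quat a.@[v] b.@[v] c.@[v] d.@[v].
Proof.
elim=> [a| |f g _ [a1 [b1 [c1 [d1 h1]]]] _ [a2 [b2 [c2 [d2 h2]]]]
         |f _ [a1 [b1 [c1 [d1 h1]]]]
         |f g _ [a1 [b1 [c1 [d1 h1]]]] _ [a2 [b2 [c2 [d2 h2]]]]].
- exists (qRe a)%:MP, (qIi a)%:MP, (qIj a)%:MP, (qIk a)%:MP => v.
  by rewrite !mevalC; case: a.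
- by exists 'X_(0%R), 'X_(1%R), 'X_(2%R), 'X_(3%R) => v; rewrite !mevalXU.
- exists (a1 + a2), (b1 + b2), (c1 + c2), (d1 + d2) => v.
  by rewrite /fadd h1 h2 /qadd /= !mevalD.
- exists (- a1), (- b1), (- c1), (- d1) => v.
  by rewrite /fopp h1 /qopp /= !mevalN.
- exists (a1 * a2 - b1 * b2 - c1 * c2 - d1 * d2),
         (a1 * b2 + b1 * a2 + c1 * d2 - d1 * c2),
         (a1 * c2 - b1 * d2 + c1 * a2 + d1 * b2),
         (a1 * d2 + b1 * c2 - c1 * b2 + d1 * a2) => v.
  by rewrite /fmul h1 h2 /qmul /= !(mevalD, mevalN, mevalM).
Qed.

Lemma sumsq_mul (p q : quat R -> quat R) v :
  sumsq (fmul p q) v = sumsq p v * sumsq q v.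
Proof.
rewrite /sumsq /fmul /qmul /=.
set x := Quat _ _ _ _.
case: (p x) => a0 a1 a2 a3; case: (q x) => b0 b1 b2 b3 /=.
ring.
Qed.


Lemma sumsq_poly (p : quat R -> quat R) (a b c d : {mpoly R[4]}) :
  (forall v : 'I_4 -> R,
    p (Quat (v 0%R) (v 1%R) (v 2%R) (v 3%R)) = Quat a.@[v] b.@[v] c.@[v] d.@[v]) ->
  forall v, (a * a + b * b + c * c + d * d).@[v] = sumsq p v.
Proof.
by move=> h v; rewrite /sumsq h /= !(mevalD, mevalM) !expr2.
Qed.

Lemma part1 (p : quat R -> quat R) : inH1 p ->
  exists d : option rat, degH p d /\
       (d = None <-> p = @fzero R) /\
       (forall r : rat, d = Some r -> r \is a Num.int).
Proof.
move=> /inH1_poly [a [b [c [d h]]]].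
have hS := sumsq_poly h.
set S := a * a + b * b + c * c + d * d in hS.
have gS : good S by rewrite /S !good_add ?good_sq.
case: (classic (p = @fzero R)) => [->|nz].
  exists None; split; last by split.
  exists None; split => //; exists 0; split; last by rewrite eqxx.
  by move=> v; rewrite meval0 /sumsq /fzero /= expr0n /= !addr0.
have nzS : S != 0.
  apply/negP => /eqP S0; apply: nz; apply: functional_extensionality => x.
  case: x => x0 x1 x2 x3.
  pose v := fun i : 'I_4 => nth 0 [:: x0; x1; x2; x3] i.
  have E : sumsq p v = 0 by rewrite -hS S0 meval0.
  rewrite /sumsq in E.
  change (Quat (v 0%R) (v 1%R) (v 2%R) (v 3%R)) with (Quat x0 x1 x2 x3) in E.
  rewrite /fzero; case: (p _) E => y0 y1 y2 y3 /= E.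
  have := sqr_ge0 y0; have := sqr_ge0 y1; have := sqr_ge0 y2; have := sqr_ge0 y3.
  move=> g3 g2 g1 g0.
  have e0 : y0 ^+ 2 = 0 by lra.
  have e1 : y1 ^+ 2 = 0 by lra.
  have e2 : y2 ^+ 2 = 0 by lra.
  have e3 : y3 ^+ 2 = 0 by lra.
  by move/eqP: e0; move/eqP: e1; move/eqP: e2; move/eqP: e3; rewrite !sqrf_eq0 => /eqP-> /eqP-> /eqP-> /eqP->.
exists (Some ((msize S).-1%:R / 2)); split.
  exists (Some (msize S).-1); split => //; exists S; split => //.
  by rewrite (negbTE nzS).
split; first by split => // E; exfalso; apply: nz.
move=> r [<-]; have ev := good_deg gS nzS.
rewrite -[(msize S).-1]odd_double_half (negbTE ev) add0n -muln2 natrM mulfK //.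
Qed.

Lemma part2 (p q : quat R -> quat R) (dp dq : option rat) :
  degH p dp -> degH q dq -> degH (fmul p q) (oadd dp dq).
Proof.
move=> [tp [[P [hP ->]] ->]] [tq [[Q [hQ ->]] ->]].
exists (if P * Q == 0 then None else Some (msize (P * Q)).-1); split.
  exists (P * Q); split => // v; by rewrite mevalM hP hQ sumsq_mul.
have [->|nzP] := eqVneq P 0; first by rewrite mul0r eqxx.
have [->|nzQ] := eqVneq Q 0; first by rewrite mulr0 eqxx.
rewrite (negbTE (mulf_neq0 nzP nzQ)) /= msizeM //.
have sP : (0 < msize P)%N by rewrite lt0n msize_poly_eq0.
have sQ : (0 < msize Q)%N by rewrite lt0n msize_poly_eq0.
congr Some; rewrite -mulrDl -natrD; congr (_%:R / _).
by case: (msize P) sP => // m _; case: (msize Q) sQ => // k _; rewrite addSn addnS.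
Qed.
End Main.

Unset Implicit Arguments.
Theorem lemma3 (R : realType) :
  (forall p : quat R -> quat R, inH1 p ->
     exists d : option rat, degH p d /\
       (d = None <-> p = @fzero R) /\
       (forall r : rat, d = Some r -> r \is a Num.int)) /\
  (forall (p q : quat R -> quat R) (dp dq : option rat),
     inH1 p -> inH1 q -> degH p dp -> degH q dq ->
     degH (fmul p q) (oadd dp dq)).
Proof.
split; first exact: part1.
by move=> p q dp dq _ _; exact: part2.
Qed.
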